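(* In the BBoxER framework described in the context, for fixed initial model $m_0$, seed $\omega$, algorithm $a$ and budget $b$, and any datasets $D_1,\dots,D_n$, $$\#\{\mathrm{BBoxER}(m_0,\omega,D_i,a,b): i\in\{1,\dots,n\}\}\le \sup_{D}\prod_{i=1}^b k_i(\omega,D,a,b).$$
   Context: $\mathrm{BBoxER}(m_0,\omega,D,a,b)$ is the model output by the following procedure: a black-box optimization algorithm $a$, deterministic given its seed $\omega$, is initialized from $\omega$; at each iteration $i=1,\dots,b$ it proposes a parameter $x_i$ and model $m_i=\mathrm{modified}(m_0,x_i)$ (for a fixed map $\mathrm{modified}$), declares a finite number $k_i=k_i(\omega,D,a,b)\ge1$ of possible comparison outcomes, and receives $\mathrm{choice}_i\in\{1,\dots,k_i\}$ computed by comparing $m_1,\dots,m_i$ on the dataset $D$; finally it recommends $\widehat x$ and outputs $\mathrm{modified}(m_0,\widehat x)$. The algorithm accesses $D$ only through the $\mathrm{choice}_i$, so $x_i,k_i$ are deterministic functions of $(\omega,a,b,\mathrm{choice}_1,\dots,\mathrm{choice}_{i-1})$ and $\widehat x$ is a deterministic function of $(\omega,a,b,\mathrm{choice}_1,\dots,\mathrm{choice}_b)$. The supremum is over all datasets. *)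

(* Defs.v *)
From mathcomp Require Import all_boot.
Set Implicit Arguments. Unset Strict Implicit. Unset Printing Implicit Defensive.

(* A black-box optimization algorithm [a] over parameter space [X], with seeds
   in [Omega].  It is deterministic given its seed [w] and budget [b]; it only
   sees the past comparison outcomes (the history [h : seq nat] of choices
   choice_1, ..., choice_{i-1}):
   - [a_k w b h] : number k_i of possible comparison outcomes declared at step i
   - [a_x w b h] : parameter x_i proposed at step i
   - [a_rec w b h] : recommended parameter after the full history (length b). *)
Record bb_algo (Omega X : Type) := BBAlgo {
  a_k : Omega -> nat -> seq nat -> nat;
  a_x : Omega -> nat -> seq nat -> X;
  a_rec : Omega -> nat -> seq nat -> X }.

Section BBoxER.
Variables (Omega X M Data : Type).
Variable modified : M -> X -> M.
(* [cmp D ms k] : the comparison outcome in {1..k} obtained by comparing the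
   models ms = [:: m_1; ...; m_i] on dataset D, when k outcomes are declared. *)
Variable cmp : Data -> seq M -> nat -> nat.

Fixpoint bb_hist (m0 : M) (w : Omega) (D : Data) (a : bb_algo Omega X) (b : nat)
    (i : nat) : seq nat :=
  match i with
  | 0 => [::]
  | i'.+1 =>
      let h := bb_hist m0 w D a b i' in
      let ms := [seq modified m0 (a_x a w b (take j h)) | j <- iota 0 i] in
      rcons h (cmp D ms (a_k a w b h))
  end.

Definition bb_ks m0 w D a b : seq nat :=
  let h := bb_hist m0 w D a b b in
  [seq a_k a w b (take j h) | j <- iota 0 b].

Definition BBoxER m0 w D a b : M :=
  modified m0 (a_rec a w b (bb_hist m0 w D a b b)).

End BBoxER.

(* Main.v *)
Require Import Defs.
From mathcomp Require Import all_boot.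

Lemma size_flatten_le (T : eqType) (U : Type) (f : T -> seq U) (l : seq T) m :
  (forall x, x \in l -> size (f x) <= m) ->
  size (flatten (map f l)) <= size l * m.
Proof.
elim: l => [|x l IH] //= H.
rewrite size_cat mulSn leq_add ?H ?mem_head // IH // => y yl.
by rewrite H // in_cons yl orbT.
Qed.

Lemma tree_count (K : seq nat -> nat) (HK : forall h, 0 < K h) n :
  forall (p : seq nat) (S : seq (seq nat)) (B : nat),
  (forall s, s \in S -> size s = n) ->
  (forall s, s \in S -> forall i, i < n -> 0 < nth 0 s i <= K (p ++ take i s)) ->
  (forall s, s \in S -> \prod_(i < n) K (p ++ take i s) <= B) ->
  size (undup S) <= B.
Proof.
elim: n => [|n IH] p S B Hsz Hc Hp.
  case: S Hsz Hc Hp => [|s S] Hsz Hc Hp //.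
  have := Hp s (mem_head _ _); rewrite big_ord0 => HB.
  apply: leq_trans HB.
  have -> : 1 = size [:: [::] : seq nat] by [].
  apply: uniq_leq_size; first exact: undup_uniq.
  move=> t; rewrite mem_undup => /Hsz /size0nil ->; exact: mem_head.
set k := K p.
have kP : 0 < k := HK p.
pose Sc c := [seq behead s | s <- S & head 0 s == c].
apply: (@leq_trans (size (flatten [seq map (cons c) (undup (Sc c)) | c <- iota 1 k]))).
  apply: uniq_leq_size; first exact: undup_uniq.
  move=> s; rewrite mem_undup => sS.
  case: s sS => [|c s'] sS; first by have := Hsz _ sS.
  apply/flattenP; exists (map (cons c) (undup (Sc c))).
    apply: map_f; rewrite mem_iota.
    have := Hc _ sS 0 isT; rewrite /= cats0 => /andP [c0 ck].
    by rewrite c0 add1n ltnS.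
  apply: map_f; rewrite mem_undup; apply/mapP; exists (c :: s') => //.
  by rewrite mem_filter /= eqxx.
apply: (@leq_trans (size (iota 1 k) * (B %/ k))); last first.
  by rewrite size_iota mulnC leq_trunc_div.
apply: size_flatten_le => c _; rewrite size_map.
apply: (IH (rcons p c)).
- move=> t /mapP [s]; rewrite mem_filter => /andP [_ sS] ->.
  by rewrite size_behead (Hsz _ sS).
- move=> t /mapP [s]; rewrite mem_filter => /andP [hc sS] -> i lti.
  case: s hc sS => [|c' s'] hc sS; first by have := Hsz _ sS.
  move: hc => /= /eqP hc; subst c'.
  have := Hc _ sS i.+1 lti; by rewrite /= cat_rcons.
- move=> t /mapP [s]; rewrite mem_filter => /andP [hc sS] ->.
  case: s hc sS => [|c' s'] hc sS; first by have := Hsz _ sS.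
  move: hc => /= /eqP hc; subst c'.
  rewrite leq_divRL // mulnC.
  have := Hp _ sS; rewrite big_ord_recl /= cats0.
  congr (_ <= _); congr (_ * _); apply: eq_bigr => i _.
  by rewrite cat_rcons.
Qed.

Lemma mem_map_ex (T : Type) (U : eqType) (g : T -> U) l u :
  u \in map g l -> exists2 x, u = g x & True.
Proof.
elim: l => //= x l IH; rewrite in_cons => /orP [/eqP -> | /IH //].
by exists x.
Qed.

Section Hist.
Variables (Omega X : Type) (M : eqType) (Data : Type)
    (modified : M -> X -> M) (cmp : Data -> seq M -> nat -> nat)
    (a : bb_algo Omega X) (m0 : M) (w : Omega) (b : nat) (D : Data).

Local Notation H := (bb_hist modified cmp m0 w D a b).

Lemma size_hist i : size (H i) = i.
Proof. by elim: i => //= i IH; rewrite size_rcons IH. Qed.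

Lemma take_hist i j : i <= j -> take i (H j) = H i.
Proof.
elim: j => [|j IH]; first by rewrite leqn0 => /eqP ->.
rewrite leq_eqVlt => /orP [/eqP -> | ltij].
  by rewrite take_oversize ?size_hist.
rewrite /= -cats1 takel_cat ?IH ?size_hist //.
Qed.

Lemma nth_hist i j : i < j -> nth 0 (H j) i =
  cmp D [seq modified m0 (a_x a w b (take k (H i))) | k <- iota 0 i.+1]
      (a_k a w b (H i)).
Proof.
move=> lij; rewrite -(nth_take 0 (ltnSn i)) take_hist //=.
by rewrite nth_rcons size_hist ltnn eqxx.
Qed.
End Hist.

Theorem theorem5 (Omega X : Type) (M : eqType) (Data : Type)
    (modified : M -> X -> M) (cmp : Data -> seq M -> nat -> nat)
    (a : bb_algo Omega X) (m0 : M) (w : Omega) (b : nat) (Ds : seq Data) :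
  (* each step declares at least one possible outcome *)
  (forall h : seq nat, 1 <= a_k a w b h) ->
  (* the received choice lies in {1, ..., k} *)
  (forall (D : Data) (ms : seq M) (k : nat), 1 <= k -> 1 <= cmp D ms k <= k) ->
  forall B : nat,
    (forall D : Data, \prod_(k <- bb_ks modified cmp m0 w D a b) k <= B) ->
    size (undup [seq BBoxER modified cmp m0 w D a b | D <- Ds]) <= B.
Proof.
move=> HK Hcmp B HB.
pose Hf D := bb_hist modified cmp m0 w D a b b.
apply: (@leq_trans (size (undup [seq Hf D | D <- Ds]))).
  rewrite -(size_map (fun h => modified m0 (a_rec a w b h))).
  apply: uniq_leq_size; first exact: undup_uniq.
  have -> : [seq BBoxER modified cmp m0 w D a b | D <- Ds] =
      map (fun h => modified m0 (a_rec a w b h)) [seq Hf D | D <- Ds].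
    by rewrite -map_comp; apply: eq_map.
  move=> m; rewrite mem_undup => /mapP [h hD ->].
  by apply: map_f; rewrite mem_undup.
apply: (@tree_count (a_k a w b) HK b [::]).
- by move=> s /mem_map_ex [D -> _]; rewrite /Hf size_hist.
- move=> s /mem_map_ex [D -> _] i lti; rewrite /Hf. have E := @nth_hist _ _ _ _ modified cmp a m0 w b D _ _ lti. rewrite E cat0s (@take_hist _ _ _ _ modified cmp a m0 w b D _ _ (ltnW lti)). apply: Hcmp; exact: HK.
- move=> s /mem_map_ex [D -> _]; have := HB D.
  rewrite /bb_ks big_map.
  have -> : iota 0 b = index_iota 0 b by rewrite /index_iota subn0.
  rewrite big_mkord; apply: leq_trans; rewrite leq_eqVlt; apply/orP; left; apply/eqP.
  by apply: eq_bigr => i _; rewrite cat0s.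
Qed.
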